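(* Let $F$ be a CNF formula over variables $x_1,\dots,x_n$ with clauses $C_1,\dots,C_m$ of two or three literals each. Let $R$ be the triple set and $H=(V,A)$ the hypergraph constructed from $F$ as described in the context. If $P\subseteq A$ is an acyclic path in $H$ from $\alpha\beta$ to $c_{m+1}\gamma$, then the triple set $\mathrm{triples}(P)=\{pq|o : \{p,q\}\to\{\{p,o\},\{q,o\}\}\in P\}$ is consistent.
   Context: **Triples and trees.** A rooted triple $pq|o$, with $p,q,o$ distinct leaves and unordered in $p,q$, is displayed by a rooted binary tree $T$ (leaf set containing $p,q,o$) if the path from $p$ to $q$ is node-disjoint from the path from $o$ to the root. A triple set is consistent if some rooted binary tree displays all of its triples. **Triples and arcs.** The triple $pq|o$ corresponds to the hyperarc $\mathrm{arc}(pq|o)=\{p,q\}\to\{\{p,o\},\{q,o\}\}$, and conversely; we write $pq$ for the node $\{p,q\}$. **Hypergraph notions.** A hyperarc $u\to\{v,v'\}$ has tail $u$ and heads $\{v,v'\}$. A path from $u_0$ to $u_\ell$ is a sequence of distinct arcs $(a_1,\dots,a_\ell)$ with $\mathrm{t}(a_1)=u_0$, $u_\ell\in\mathrm{h}(a_\ell)$, and $\mathrm{t}(a_{k+1})\in\mathrm{h}(a_k)$ for all $k$. It is acyclic if no $a_k$ has a head equal to $\mathrm{t}(a_{k'})$ with $k'<k$. **Construction.** Use leaves - $x_i^j,\bar x_i^j,y_i^j,\bar y_i^j$ for $i\in[n]$, $j\in[m]$; - $b_i,b'_i$ for $i\in[n+1]$; - $c_j,d_j$ for $j\in[m]$; -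 $c_{m+1}$, and $\alpha,\beta,\gamma$. The triple set $R$ is the union of the following groups. (i) For each $i\in[n]$: - $b_ib'_i|x_i^1$ and $b'_ix_i^1|y_i^1$; - $x_i^jy_i^j|x_i^{j+1}$ and $y_i^jx_i^{j+1}|y_i^{j+1}$ for $1\le j\le m-1$; - $x_i^my_i^m|b_{i+1}$ and $y_i^mb_{i+1}|b'_{i+1}$. (ii) For each $i\in[n]$: - $b_ib'_i|\bar x_i^1$ and $b'_i\bar x_i^1|\bar y_i^1$; - $\bar x_i^j\bar y_i^j|\bar x_i^{j+1}$ and $\bar y_i^j\bar x_i^{j+1}|\bar y_i^{j+1}$ for $1\le j\le m-1$; - $\bar x_i^m\bar y_i^m|b_{i+1}$ and $\bar x_i^mb_{i+1}|b'_{i+1}$. (iii) For each clause $C_j$: - for each positive occurrence of $x_i$ in $C_j$, the triples $c_jd_j|x_i^j$, $c_jx_i^j|y_i^j$, $c_jy_i^j|c_{j+1}$; - for each negative occurrence of $x_i$ in $C_j$, the same triples with $\bar x_i^j,\bar y_i^j$ in place of $x_i^j,y_i^j$; - if $j<m$, the triple $c_jc_{j+1}|d_{j+1}$. (iv) Connecting triples: $\alpha\beta|b_1$, $\beta b_1|b'_1$, $b_{n+1}b'_{n+1}|c_1$, $b'_{n+1}c_1|d_1$, $c_mc_{m+1}|\gamma$. Then $A=\{\mathrm{arc}(t):t\in R\}$, and $V$ is the set of leaf pairs occurring in arcs of $A$. *)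

(* Defs.v *)
From Stdlib Require Import Arith List Lia.
Import ListNotations.

Inductive leaf : Type :=
| LX  (i j : nat)
| LXb (i j : nat)
| LY  (i j : nat)
| LYb (i j : nat)
| LB  (i : nat)
| LB' (i : nat)
| LC  (j : nat)
| LD  (j : nat)
| LAlpha | LBeta | LGamma.

Definition leaf_eq_dec (x y : leaf) : {x = y} + {x <> y}.
Proof. decide equality; apply Nat.eq_dec. Defined.

(* A literal is (i, true) for x_i and (i, false) for the negation of x_i;
   variables are numbered 1..n, clauses C_1..C_m with C_j = nth (j-1) F []. *)
Definition literal := (nat * bool)%type.
Definition clause := list literal.
Definition cnf := list clause.

Definition clause_at (F : cnf) (j : nat) : clause := nth (j - 1) F [].

Definition wf_cnf (n : nat) (F : cnf) : Prop :=
  forall C, In C F ->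
    (length C = 2 \/ length C = 3) /\
    (forall i s, In (i, s) C -> 1 <= i <= n).

(* ---------- The triple set R (one orientation of each pq|o) ---------- *)
Inductive R_base (n : nat) (F : cnf) : leaf -> leaf -> leaf -> Prop :=
| Ri1 i : 1 <= i <= n -> R_base n F (LB i) (LB' i) (LX i 1)
| Ri2 i : 1 <= i <= n -> R_base n F (LB' i) (LX i 1) (LY i 1)
| Ri3 i j : 1 <= i <= n -> 1 <= j <= length F - 1 ->
    R_base n F (LX i j) (LY i j) (LX i (j + 1))
| Ri4 i j : 1 <= i <= n -> 1 <= j <= length F - 1 ->
    R_base n F (LY i j) (LX i (j + 1)) (LY i (j + 1))
| Ri5 i : 1 <= i <= n ->
    R_base n F (LX i (length F)) (LY i (length F)) (LB (i + 1))
| Ri6 i : 1 <= i <= n ->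
    R_base n F (LY i (length F)) (LB (i + 1)) (LB' (i + 1))
| Rii1 i : 1 <= i <= n -> R_base n F (LB i) (LB' i) (LXb i 1)
| Rii2 i : 1 <= i <= n -> R_base n F (LB' i) (LXb i 1) (LYb i 1)
| Rii3 i j : 1 <= i <= n -> 1 <= j <= length F - 1 ->
    R_base n F (LXb i j) (LYb i j) (LXb i (j + 1))
| Rii4 i j : 1 <= i <= n -> 1 <= j <= length F - 1 ->
    R_base n F (LYb i j) (LXb i (j + 1)) (LYb i (j + 1))
| Rii5 i : 1 <= i <= n ->
    R_base n F (LXb i (length F)) (LYb i (length F)) (LB (i + 1))
| Rii6 i : 1 <= i <= n ->
    R_base n F (LXb i (length F)) (LB (i + 1)) (LB' (i + 1))
| Riii1 j i : 1 <= j <= length F -> In (i, true) (clause_at F j) ->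
    R_base n F (LC j) (LD j) (LX i j)
| Riii2 j i : 1 <= j <= length F -> In (i, true) (clause_at F j) ->
    R_base n F (LC j) (LX i j) (LY i j)
| Riii3 j i : 1 <= j <= length F -> In (i, true) (clause_at F j) ->
    R_base n F (LC j) (LY i j) (LC (j + 1))
| Riii4 j i : 1 <= j <= length F -> In (i, false) (clause_at F j) ->
    R_base n F (LC j) (LD j) (LXb i j)
| Riii5 j i : 1 <= j <= length F -> In (i, false) (clause_at F j) ->
    R_base n F (LC j) (LXb i j) (LYb i j)
| Riii6 j i : 1 <= j <= length F -> In (i, false) (clause_at F j) ->
    R_base n F (LC j) (LYb i j) (LC (j + 1))
| Riii7 j : 1 <= j < length F ->
    R_base n F (LC j) (LC (j + 1)) (LD (j + 1))
| Riv1 : R_base n F LAlpha LBeta (LB 1)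
| Riv2 : R_base n F LBeta (LB 1) (LB' 1)
| Riv3 : R_base n F (LB (n + 1)) (LB' (n + 1)) (LC 1)
| Riv4 : R_base n F (LB' (n + 1)) (LC 1) (LD 1)
| Riv5 : R_base n F (LC (length F)) (LC (length F + 1)) LGamma.

(* A node {p,q} is represented by a pair, compared up to swapping. *)
Definition node := (leaf * leaf)%type.
Definition node_eq (u v : node) : Prop :=
  (fst u = fst v /\ snd u = snd v) \/ (fst u = snd v /\ snd u = fst v).

Record arc := mkArc { tl : node; hd1 : node; hd2 : node }.

Definition arc_eq (a b : arc) : Prop :=
  node_eq (tl a) (tl b) /\
  ((node_eq (hd1 a) (hd1 b) /\ node_eq (hd2 a) (hd2 b)) \/
   (node_eq (hd1 a) (hd2 b) /\ node_eq (hd2 a) (hd1 b))).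

Definition is_head (a : arc) (u : node) : Prop :=
  node_eq (hd1 a) u \/ node_eq (hd2 a) u.

Definition arc_of (p q o : leaf) : arc := mkArc (p, q) (p, o) (q, o).

Definition in_A (n : nat) (F : cnf) (a : arc) : Prop :=
  exists p q o, R_base n F p q o /\ arc_eq a (arc_of p q o).

Definition dummy_arc : arc := mkArc (LAlpha, LAlpha) (LAlpha, LAlpha) (LAlpha, LAlpha).

Definition is_path (P : list arc) (u0 ul : node) : Prop :=
  P <> [] /\
  (forall k k', k < k' < length P ->
      ~ arc_eq (nth k P dummy_arc) (nth k' P dummy_arc)) /\
  node_eq (tl (nth 0 P dummy_arc)) u0 /\
  is_head (nth (length P - 1) P dummy_arc) ul /\
  (forall k, k + 1 < length P ->
      is_head (nth k P dummy_arc) (tl (nth (k + 1) P dummy_arc))).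

Definition acyclic (P : list arc) : Prop :=
  forall k k', k' < k < length P ->
    ~ is_head (nth k P dummy_arc) (tl (nth k' P dummy_arc)).

Definition triples_of (P : list arc) (p q o : leaf) : Prop :=
  p <> q /\ p <> o /\ q <> o /\
  exists a, In a P /\ arc_eq a (arc_of p q o).

Inductive tree : Type :=
| TLeaf (x : leaf)
| TNode (l r : tree).

Fixpoint leaves (T : tree) : list leaf :=
  match T with
  | TLeaf x => [x]
  | TNode l r => leaves l ++ leaves r
  end.

(* Nodes of a tree are addressed by the list of left(false)/right(true)
   moves from the root. *)
Fixpoint addr (T : tree) (x : leaf) : option (list bool) :=
  match T with
  | TLeaf y => if leaf_eq_dec x y then Some [] else None
  | TNode l r =>
      match addr l x with
      | Some a => Some (false :: a)
      | None => option_map (cons true) (addr r x)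
      end
  end.

(* v is an ancestor of (or equal to) w *)
Definition is_prefix (v w : list bool) : Prop := exists s, w = v ++ s.

Fixpoint lcp (a b : list bool) : list bool :=
  match a, b with
  | x :: a', y :: b' => if Bool.eqb x y then x :: lcp a' b' else []
  | _, _ => []
  end.

(* nodes on the path between the nodes with addresses a and b *)
Definition on_path (a b v : list bool) : Prop :=
  (is_prefix v a \/ is_prefix v b) /\ is_prefix (lcp a b) v.

Definition on_root_path (a v : list bool) : Prop := is_prefix v a.

Definition displays (T : tree) (p q o : leaf) : Prop :=
  exists ap aq ao,
    addr T p = Some ap /\ addr T q = Some aq /\ addr T o = Some ao /\
    forall v, ~ (on_path ap aq v /\ on_root_path ao v).

Definition phylo_tree (T : tree) : Prop := NoDup (leaves T).

Definition consistent (S : leaf -> leaf -> leaf -> Prop) : Prop :=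
  exists T, phylo_tree T /\ forall p q o, S p q o -> displays T p q o.

(* Main.v *)
From Pilot Require Import Defs.
From Stdlib Require Import Arith List.
Import ListNotations.
From Stdlib Require Import Lia Permutation Sorted ClassicalEpsilon.
Import Pilot.Defs.

Lemma ne_refl u : node_eq u u.
Proof. left; auto. Qed.
Lemma ne_sym u v : node_eq u v -> node_eq v u.
Proof. unfold node_eq; intuition. Qed.
Lemma ne_trans u v w : node_eq u v -> node_eq v w -> node_eq u w.
Proof. unfold node_eq; intros [[? ?]|[? ?]] [[? ?]|[? ?]]; [left|right|right|left]; split; congruence. Qed.
Lemma ne_swap a b : node_eq (a,b) (b,a).
Proof. right; auto. Qed.

Lemma ae_sym a b : arc_eq a b -> arc_eq b a.
Proof. unfold arc_eq; intros [H1 [[H2 H3]|[H2 H3]]]; split; eauto using ne_sym. Qed.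
Lemma ae_trans a b c : arc_eq a b -> arc_eq b c -> arc_eq a c.
Proof.
  unfold arc_eq; intros [H1 [[H2 H3]|[H2 H3]]] [G1 [[G2 G3]|[G2 G3]]];
  split; eauto using ne_trans.
Qed.
Lemma ae_refl a : arc_eq a a.
Proof. split; [apply ne_refl| left; split; apply ne_refl]. Qed.

Lemma arc_of_ne p q o p' q' : node_eq (p,q) (p',q') -> arc_eq (arc_of p q o) (arc_of p' q' o).
Proof.
  unfold node_eq; simpl; intros [[-> ->]|[-> ->]].
  - apply ae_refl.
  - split; [apply ne_swap|]. right; simpl; split; apply ne_refl.
Qed.

Lemma is_head_ae a b u : arc_eq a b -> is_head a u -> is_head b u.
Proof.
  unfold arc_eq, is_head; intros [_ [[H2 H3]|[H2 H3]]] [G|G]; eauto using ne_trans, ne_sym.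
Qed.
Lemma is_head_ne a u v : is_head a u -> node_eq u v -> is_head a v.
Proof. unfold is_head; intros [G|G] H; eauto using ne_trans. Qed.

Ltac is_leafc t := lazymatch t with
  | LX _ _ => idtac | LXb _ _ => idtac | LY _ _ => idtac | LYb _ _ => idtac
  | LB _ => idtac | LB' _ => idtac | LC _ => idtac | LD _ => idtac
  | LAlpha => idtac | LBeta => idtac | LGamma => idtac end.

Ltac leaf_inv :=
  repeat (subst; match goal with
  | H : @eq leaf ?a ?b |- _ => is_leafc a; is_leafc b; inversion H; clear H
  | H : (_ , _) = (_ , _) |- _ => inversion H; clear H
  end); subst.

Ltac ne_kill :=
  unfold node_eq in *; simpl in *;
  repeat match goal with
  | H : _ /\ _ |- _ => destruct H
  | H : _ \/ _ |- _ => destruct H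
  end; leaf_inv; try lia; try congruence.

Lemma R_distinct n F p q o : R_base n F p q o -> p <> q /\ p <> o /\ q <> o.
Proof. intros H; inversion H; subst; repeat split; intro E; leaf_inv; lia. Qed.

Lemma arc_of_inj p q o p' q' o' :
  p <> q -> p <> o -> q <> o -> p' <> q' -> p' <> o' -> q' <> o' ->
  arc_eq (arc_of p q o) (arc_of p' q' o') -> o = o' /\ node_eq (p,q) (p',q').
Proof.
  unfold arc_eq, arc_of, node_eq; simpl; intros.
  split; [|tauto].
  repeat match goal with
  | H : _ /\ _ |- _ => destruct H
  | H : _ \/ _ |- _ => destruct H
  end; subst; congruence.
Qed.

Definition X (s : bool) i j := if s then LX i j else LXb i j.
Definition Y (s : bool) i j := if s then LY i j else LYb i j.
Inductive cpos := CP0 | CPxy (j : nat) | CPyx (j : nat) | CPend.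
Definition cnode (m i : nat) (s : bool) (c : cpos) : node :=
  match c with
  | CP0 => (LB' i, X s i 1)
  | CPxy j => (X s i j, Y s i j)
  | CPyx j => (Y s i j, X s i (j+1))
  | CPend => ((if s then LY i m else LXb i m), LB (i+1))
  end.
Inductive cstep (m : nat) : cpos -> cpos -> Prop :=
| cs0 : cstep m CP0 (CPxy 1)
| cs1 j : j < m -> cstep m (CPxy j) (CPyx j)
| cs2 : cstep m (CPxy m) CPend
| cs3 j : cstep m (CPyx j) (CPxy (j+1)).
Definition hasC (u : node) := exists j, fst u = LC j \/ snd u = LC j.

Lemma hasC_ne u v : hasC u -> node_eq u v -> hasC v.
Proof. unfold hasC, node_eq; intros [j [E|E]] [[A B]|[A B]]; exists j; first [left; congruence | right; congruence]. Qed.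

Lemma cnode_inj m i s c i' s' c' : node_eq (cnode m i s c) (cnode m i' s' c') -> i = i' /\ s = s' /\ c = c'.
Proof. destruct s, s', c, c'; simpl; intro H; ne_kill; auto. Qed.

Ltac kill_R HR := inversion HR; subst; ne_kill.


Lemma wf_lit n F i s j : wf_cnf n F -> 1 <= j <= length F -> In (i,s) (clause_at F j) -> 1 <= i <= n.
Proof.
  intros Hwf Hj Hin. unfold clause_at in Hin.
  assert (HC : In (nth (j-1) F []) F) by (apply nth_In; lia).
  destruct (Hwf _ HC) as [_ H2]. eapply H2; eauto.
Qed.

Ltac hc := first [eexists; left; reflexivity | eexists; right; reflexivity
   | eapply hasC_ne; [|eassumption]; first [eexists; left; reflexivity | eexists; right; reflexivity]].
Ltac d1 := left; split; [apply ne_refl | apply ne_sym; assumption].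
Ltac d2 := right; left; split; [apply ne_refl | apply ne_sym; assumption].
Ltac d3 i s := do 2 right; left; exists i, s; split; [lia|split; [apply ne_refl|split; [reflexivity| apply ne_sym; assumption]]].
Ltac d4 := do 3 right; left; split; [apply ne_refl| split; [reflexivity| hc]].
Ltac d5 i s c c' := do 4 right; left; exists i, s, c, c'; split; [lia|split; [constructor; lia|split; [simpl; apply ne_refl| apply ne_sym; assumption]]].
Ltac d6 i s := do 5 right; left; exists i, s; split; [lia|split; [simpl; apply ne_refl| apply ne_sym; assumption]].
Ltac d7 := do 6 right; left; split; hc.
Ltac d8 i s j := do 7 right; split; [hc|]; exists i, s, j; split; [eapply wf_lit; eauto | apply ne_sym; assumption].
Lemma step n F p q o p' q' o' : wf_cnf n F -> R_base n F p q o -> R_base n F p' q' o' ->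
  (node_eq (p,o) (p',q') \/ node_eq (q,o) (p',q')) ->
  (node_eq (p,q) (LAlpha,LBeta) /\ node_eq (p',q') (LBeta, LB 1)) \/
  (node_eq (p,q) (LBeta, LB 1) /\ node_eq (p',q') (LB 1, LB' 1)) \/
  (exists i s, 1<=i<=n /\ node_eq (p,q) (LB i, LB' i) /\ o = X s i 1 /\ node_eq (p',q') (cnode (length F) i s CP0)) \/
  (node_eq (p,q) (LB (n+1), LB' (n+1)) /\ o = LC 1 /\ hasC (p',q')) \/
  (exists i s c c', 1<=i<=n /\ cstep (length F) c c' /\ node_eq (p,q) (cnode (length F) i s c) /\ node_eq (p',q') (cnode (length F) i s c')) \/
  (exists i s, 1<=i<=n /\ node_eq (p,q) (cnode (length F) i s CPend) /\ node_eq (p',q') (LB (i+1), LB' (i+1))) \/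
  (hasC (p,q) /\ hasC (p',q')) \/
  (hasC (p,q) /\ exists i s j, 1<=i<=n /\ node_eq (p',q') (cnode (length F) i s (CPxy j))).
Proof.
  intros Hwf HR HR' Hh.
  inversion HR; subst; destruct Hh as [Hh|Hh];
  try (solve [exfalso; kill_R HR']).
  all: match type of HR with
| R_base _ _ LAlpha LBeta _ => d1
| R_base _ _ LBeta (LB 1) _ => d2
| R_base _ _ (LB ?i) (LB' ?i) (LX ?i 1) => d3 i true
| R_base _ _ (LB ?i) (LB' ?i) (LXb ?i 1) => d3 i false
| R_base _ _ (LB' ?i) (LX ?i 1) _ => d5 i true CP0 (CPxy 1)
| R_base _ _ (LB' ?i) (LXb ?i 1) _ => d5 i false CP0 (CPxy 1)
| R_base _ _ (LX ?i ?j) (LY ?i ?j) (LX ?i _) => d5 i true (CPxy j) (CPyx j)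
| R_base _ _ (LX ?i ?j) (LY ?i ?j) (LB _) => d5 i true (CPxy j) CPend
| R_base _ _ (LY ?i ?j) (LX ?i _) _ => d5 i true (CPyx j) (CPxy (j+1))
| R_base _ _ (LY ?i _) (LB _) _ => d6 i true
| R_base _ _ (LXb ?i ?j) (LYb ?i ?j) (LXb ?i _) => d5 i false (CPxy j) (CPyx j)
| R_base _ _ (LXb ?i ?j) (LYb ?i ?j) (LB _) => d5 i false (CPxy j) CPend
| R_base _ _ (LYb ?i ?j) (LXb ?i _) _ => d5 i false (CPyx j) (CPxy (j+1))
| R_base _ _ (LXb ?i _) (LB _) _ => d6 i false
| R_base _ _ (LB _) (LB' _) (LC _) => d4
| R_base _ _ (LC ?j) (LX ?i ?j) _ => first [d7 | d8 i true j]
| R_base _ _ (LC ?j) (LXb ?i ?j) _ => first [d7 | d8 i false j]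
| _ => d7
end.
Qed.


Lemma last_tail n F p q o : R_base n F p q o ->
  (node_eq (p,o) (LC (length F + 1), LGamma) \/ node_eq (q,o) (LC (length F + 1), LGamma)) -> hasC (p,q).
Proof. intros HR Hh; inversion HR; subst; destruct Hh; ne_kill; hc. Qed.

Lemma pred_riii3 n F p q o j s i : R_base n F p q o ->
  (node_eq (p,o) (LC j, Y s i j) \/ node_eq (q,o) (LC j, Y s i j)) ->
  p = LC j /\ q = X s i j /\ o = Y s i j.
Proof. intros HR Hh; destruct s; inversion HR; subst; destruct Hh; ne_kill; auto. Qed.

Lemma succ_riii1 n F p q o j s i : R_base n F p q o ->
  (node_eq (LC j, X s i j) (p,q) \/ node_eq (LD j, X s i j) (p,q)) ->
  p = LC j /\ q = X s i j /\ o = Y s i j.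
Proof. intros HR Hh; destruct s; inversion HR; subst; destruct Hh; ne_kill; auto. Qed.

Definition good n F P := wf_cnf n F /\ 1 <= length F /\ (forall a, In a P -> in_A n F a) /\
  is_path P (LAlpha,LBeta) (LC (length F+1), LGamma) /\ acyclic P.

Definition ak (P : list arc) k := nth k P dummy_arc.
Definition tk (P : list arc) k := tl (nth k P dummy_arc).
Definition Tr n F P k p q o := R_base n F p q o /\ arc_eq (ak P k) (arc_of p q o).

Lemma tr_ex n F P k : good n F P -> k < length P -> exists p q o, Tr n F P k p q o.
Proof.
  intros (_&_&HA&_) Hk. destruct (HA _ (nth_In P dummy_arc Hk)) as (p&q&o&H1&H2).
  exists p, q, o; split; auto.
Qed.

Lemma tr_tail n F P k p q o : Tr n F P k p q o -> node_eq (tk P k) (p,q).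
Proof. intros [_ [H _]]; exact H. Qed.

Lemma tr_link n F P k p q o p' q' o' : good n F P -> k + 1 < length P ->
  Tr n F P k p q o -> Tr n F P (k+1) p' q' o' ->
  node_eq (p,o) (p',q') \/ node_eq (q,o) (p',q').
Proof.
  intros (_&_&_&(_&_&_&_&Hl)&_) Hk [_ H1] H2.
  pose proof (Hl k Hk) as Hh. apply tr_tail in H2.
  eapply is_head_ae in Hh; [|exact H1]. eapply is_head_ne in Hh; [|exact H2].
  destruct Hh as [Hh|Hh]; simpl in Hh; auto.
Qed.

Lemma tr_notlast n F P k p q o : good n F P -> k < length P -> Tr n F P k p q o ->
  ~ hasC (p,q) -> k + 1 < length P.
Proof.
  intros G Hk Htr HC.
  destruct (Nat.eq_dec (k+1) (length P)); [|lia]. exfalso.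
  destruct G as (_&_&_&(_&_&_&Hl&_)&_).
  replace (length P - 1) with k in Hl by lia.
  destruct Htr as [HR H1]. eapply is_head_ae in Hl; [|exact H1].
  apply HC. eapply last_tail; [exact HR|]. destruct Hl as [Hh|Hh]; simpl in Hh; auto.
Qed.

Lemma tr_acyc n F P k k' p q o : good n F P -> k' < k < length P -> Tr n F P k p q o ->
  ~ node_eq (p,o) (tk P k') /\ ~ node_eq (q,o) (tk P k').
Proof.
  intros (_&_&_&_&Hac) Hk [_ H1]. pose proof (Hac k k' Hk) as Hn.
  split; intro E; apply Hn; apply is_head_ae with (arc_of p q o); try (apply ae_sym; auto).
  left; exact E. right; exact E.
Qed.

Lemma tr_self n F p q o : R_base n F p q o -> ~ node_eq (p,o) (p,q) /\ ~ node_eq (q,o) (p,q).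
Proof. intros HR; destruct (R_distinct _ _ _ _ _ HR) as (?&?&?); unfold node_eq; simpl; intuition congruence. Qed.

Definition bvis P k i := exists k', k' < k /\ node_eq (tk P k') (LB i, LB' i).
Definition VXk P k i s := exists k', k' < k /\ arc_eq (ak P k') (arc_of (LB i) (LB' i) (X s i 1)).

Definition Vs n (F : cnf) P k := (forall k', k' <= k -> ~ hasC (tk P k')) /\
  (node_eq (tk P k) (LAlpha,LBeta) \/ node_eq (tk P k) (LBeta, LB 1) \/
   (exists i, 1<=i<=n+1 /\ node_eq (tk P k) (LB i, LB' i) /\ forall i', 1<=i'<i -> bvis P k i') \/
   (exists i s c, 1<=i<=n /\ node_eq (tk P k) (cnode (length F) i s c) /\
        (forall i', 1<=i'<=i -> bvis P k i') /\ VXk P k i s)).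
Definition Cs n P k := hasC (tk P k) /\ forall i', 1<=i'<=n+1 -> bvis P k i'.
Definition Fs n (F : cnf) P k := (exists i s c, 1<=i<=n /\ node_eq (tk P k) (cnode (length F) i s c)) /\
   forall i', 1<=i'<=n+1 -> bvis P k i'.

Ltac expl_cnode H := repeat match type of H with context [cnode _ _ ?s ?c] =>
   first [is_var s; destruct s | is_var c; destruct c] end.
Ltac nek H := expl_cnode H; simpl in H; unfold node_eq in H; simpl in H;
   destruct H as [[? ?]|[? ?]]; leaf_inv; try lia; try congruence.
Ltac hck H := let jj := fresh "jj" in let E := fresh "E" in
   destruct H as [jj [E|E]]; simpl in E; subst; try discriminate.

Lemma bvis_mono P k i : bvis P k i -> bvis P (k+1) i.
Proof. intros (k'&?&?); exists k'; split; [lia|auto]. Qed.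
Lemma VXk_mono P k i s : VXk P k i s -> VXk P (k+1) i s.
Proof. intros (k'&?&?); exists k'; split; [lia|auto]. Qed.

Lemma noC_ext P k : (forall k', k' <= k -> ~ hasC (tk P k')) -> ~ hasC (tk P (k+1)) ->
  forall k', k' <= k+1 -> ~ hasC (tk P k').
Proof. intros H1 H2 k' Hk'. destruct (Nat.eq_dec k' (k+1)); [subst; auto|apply H1; lia]. Qed.

Lemma noC_of P k B : node_eq (tk P k) B -> ~ hasC B -> ~ hasC (tk P k).
Proof. intros H1 H2 H3; apply H2; eapply hasC_ne; eauto. Qed.

Lemma n_pos n F P : good n F P -> 1 <= n.
Proof.
  intros (Hwf&Hm&_). destruct F as [|C F']; simpl in Hm; [lia|].
  destruct (Hwf C (or_introl eq_refl)) as [Hl Hi].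
  destruct C as [|[i s] C']; simpl in Hl; [lia|].
  specialize (Hi i s (or_introl eq_refl)); lia.
Qed.

Ltac setup G Hk k :=
  let p := fresh "p" in let q := fresh "q" in let o := fresh "o" in
  let p' := fresh "p'" in let q' := fresh "q'" in let o' := fresh "o'" in
  let Tk := fresh "Tk" in let Tk1 := fresh "Tk1" in
  destruct (tr_ex _ _ _ k G ltac:(lia)) as (p&q&o&Tk);
  destruct (tr_ex _ _ _ (k+1) G Hk) as (p'&q'&o'&Tk1);
  let Ht := fresh "Ht" in let Ht1 := fresh "Ht1" in let Hl := fresh "Hl" in
  pose proof (tr_tail _ _ _ _ _ _ _ Tk) as Ht;
  pose proof (tr_tail _ _ _ _ _ _ _ Tk1) as Ht1;
  pose proof (tr_link _ _ _ _ _ _ _ _ _ _ G Hk Tk Tk1) as Hl;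
  let HS := fresh "HS" in
  pose proof (step _ _ _ _ _ _ _ _ (proj1 G) (proj1 Tk) (proj1 Tk1) Hl) as HS;
  destruct HS as [(H1&H2)|[(H1&H2)|[(i0&s0&Hi0&H1&Ho&H2)|[(H1&Ho&H2)|[(i0&s0&c0&c1&Hi0&Hcs&H1&H2)|[(i0&s0&Hi0&H1&H2)|[(H1&H2)|(H1&i0&s0&j0&Hi0&H2)]]]]]]].

Ltac clash HA' H1 := first
  [ solve [exfalso; let Hc := fresh in pose proof (ne_trans _ _ _ (ne_sym _ _ HA') H1) as Hc;
      lazymatch type of Hc with node_eq (cnode _ _ _ _) (cnode _ _ _ _) => fail | _ => nek Hc end]
  | solve [exfalso; let Hc := fresh in pose proof (hasC_ne _ _ H1 HA') as Hc; expl_cnode Hc; hck Hc] ].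

Lemma V_step n F P k : good n F P -> k+1 < length P -> Vs n F P k -> Vs n F P (k+1) \/ Cs n P (k+1).
Proof.
  intros G Hk [HV0 HV].
  destruct HV as [HA|[HA|[(i&Hi&HA&Hb)|(i&s&c&Hi&HA&Hb&Hvx)]]];
  setup G Hk k;
  assert (HA' := ne_trans _ _ _ (ne_sym _ _ Ht) HA).
  all: idtac "GOAL".
  all: try timeout 3 (clash HA' H1).
  all: try clash HA' H1.
  -
    left. assert (HN : node_eq (tk P (k+1)) (LBeta, LB 1)) by (eapply ne_trans; eauto).
    split. apply noC_ext; auto. eapply noC_of; [exact HN|]. intro HC; hck HC.
    right; left; exact HN.
  - left. assert (HN : node_eq (tk P (k+1)) (LB 1, LB' 1)) by (eapply ne_trans; eauto).
    split. apply noC_ext; auto. eapply noC_of; [exact HN|]. intro HC; hck HC.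
    right; right; left. exists 1. pose proof (n_pos _ _ _ G). split; [lia|]. split; [exact HN|]. intros; lia.
  -
    assert (Hc := ne_trans _ _ _ (ne_sym _ _ HA') H1). nek Hc.
    left. assert (HN : node_eq (tk P (k+1)) (cnode (length F) i0 s0 CP0)) by (eapply ne_trans; eauto).
    split. apply noC_ext; auto. eapply noC_of; [exact HN|]. intro HC; destruct s0; hck HC.
    right; right; right. exists i0, s0, CP0. split; [lia|]. split; [exact HN|]. split.
    + intros i' Hi'. destruct (Nat.eq_dec i' i0).
      * subst. exists k; split; [lia|exact HA].
      * apply bvis_mono, Hb; lia.
    + exists k. split; [lia|]. eapply ae_trans; [exact (proj2 Tk)|]. apply arc_of_ne; auto.
  -
    assert (Hc := ne_trans _ _ _ (ne_sym _ _ HA') H1). nek Hc.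
    right. split. eapply hasC_ne; [exact H2|]. apply ne_sym; auto.
    intros i' Hi'. destruct (Nat.eq_dec i' (n+1)).
    * subst. exists k; split; [lia|exact HA].
    * apply bvis_mono, Hb; lia.
  -
    destruct (cnode_inj _ _ _ _ _ _ _ (ne_trans _ _ _ (ne_sym _ _ HA') H1)) as (<-&<-&<-).
    left. assert (HN : node_eq (tk P (k+1)) (cnode (length F) i s c1)) by (eapply ne_trans; eauto).
    split. apply noC_ext; auto. eapply noC_of; [exact HN|]. intro HC; destruct s, c1; hck HC.
    right; right; right. exists i, s, c1. split; [lia|]. split; [exact HN|]. split.
    + intros; apply bvis_mono, Hb; lia.
    + apply VXk_mono; auto.
  -
    destruct (cnode_inj _ _ _ _ _ _ _ (ne_trans _ _ _ (ne_sym _ _ HA') H1)) as (<-&<-&_).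
    left. assert (HN : node_eq (tk P (k+1)) (LB (i+1), LB' (i+1))) by (eapply ne_trans; eauto).
    split. apply noC_ext; auto. eapply noC_of; [exact HN|]. intro HC; hck HC.
    right; right; left. exists (i+1). split; [lia|]. split; [exact HN|].
    intros; apply bvis_mono, Hb; lia.
Qed.


Ltac clash_c HC H1 := solve [exfalso; let Hc := fresh in pose proof (hasC_ne _ _ HC H1) as Hc; expl_cnode Hc; hck Hc].

Lemma C_step n F P k : good n F P -> k+1 < length P -> Cs n P k -> Cs n P (k+1) \/ Fs n F P (k+1).
Proof.
  intros G Hk [HC Hb].
  setup G Hk k; assert (HA' := hasC_ne _ _ HC Ht); try clash_c HA' H1.
  - left. split. eapply hasC_ne; [exact H2|]. apply ne_sym; auto.
    intros; apply bvis_mono, Hb; lia.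
  - right. split. exists i0, s0, (CPxy j0). split; [lia|]. eapply ne_trans; eauto.
    intros; apply bvis_mono, Hb; lia.
Qed.

Lemma F_step n F P k : good n F P -> k+1 < length P -> Fs n F P k -> Fs n F P (k+1).
Proof.
  intros G Hk [(i&s&c&Hi&HA) Hb].
  setup G Hk k; assert (HA' := ne_trans _ _ _ (ne_sym _ _ Ht) HA); try clash HA' H1.
  - split. exists i0, s0, c1. split; [lia|]. eapply ne_trans; eauto.
    intros; apply bvis_mono, Hb; lia.
  - exfalso. destruct (Hb (i0+1) ltac:(lia)) as (k'&Hk'&Hv).
    destruct (tr_acyc _ _ _ k k' _ _ _ G ltac:(lia) Tk) as [N1 N2].
    assert (E : node_eq (p',q') (tk P k')) by (eapply ne_trans; [exact H2| apply ne_sym; exact Hv]).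
    destruct Hl as [Hl|Hl]; [apply N1|apply N2]; eapply ne_trans; eauto.
Qed.

Definition Inv n F P k := Vs n F P k \/ Cs n P k \/ Fs n F P k.

Lemma Inv_all n F P k : good n F P -> k < length P -> Inv n F P k.
Proof.
  intros G. induction k as [|k IH]; intros Hk.
  - left. destruct G as (_&_&_&(_&_&H0&_)&_). split.
    + intros k' Hk'. replace k' with 0 by lia. eapply noC_of; [exact H0|]. intro HC; hck HC.
    + left; exact H0.
  - replace (S k) with (k+1) in * by lia. destruct (IH ltac:(lia)) as [H|[H|H]].
    + destruct (V_step _ _ _ _ G Hk H); unfold Inv; tauto.
    + destruct (C_step _ _ _ _ G Hk H); unfold Inv; tauto.
    + right; right; apply F_step; auto.
Qed.

Lemma F_dead n F P k : good n F P -> k < length P -> Fs n F P k -> False.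
Proof.
  intros G. remember (length P - k) as d eqn:Hd. revert k Hd.
  induction d as [|d IH]; intros k Hd Hk HF; [lia|].
  destruct (tr_ex _ _ _ k G Hk) as (p&q&o&Tk).
  assert (Hk1 : k + 1 < length P).
  { eapply tr_notlast; eauto. destruct HF as [(i&s&c&_&HA) _].
    intro HC. eapply hasC_ne in HC; [| apply ne_sym; eapply ne_trans; [apply ne_sym; exact HA| apply tr_tail in Tk; exact Tk]].
    destruct s, c; hck HC. }
  apply (IH (k+1)); [lia|auto|]. apply F_step; auto.
Qed.

Lemma Inv2 n F P k : good n F P -> k < length P -> Vs n F P k \/ Cs n P k.
Proof.
  intros G Hk. destruct (Inv_all _ _ _ _ G Hk) as [H|[H|H]]; auto.
  exfalso; eapply F_dead; eauto.
Qed.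

Definition VX P i s := exists k, k < length P /\ arc_eq (ak P k) (arc_of (LB i) (LB' i) (X s i 1)).

Lemma tr_last n F P k p q o : good n F P -> k + 1 = length P -> Tr n F P k p q o ->
  node_eq (p,o) (LC (length F + 1), LGamma) \/ node_eq (q,o) (LC (length F + 1), LGamma).
Proof.
  intros G Hk [HR H1]. destruct G as (_&_&_&(_&_&_&Hl&_)&_).
  replace (length P - 1) with k in Hl by lia.
  eapply is_head_ae in Hl; [|exact H1]. destruct Hl as [Hh|Hh]; simpl in Hh; auto.
Qed.

Lemma walk n F P k i s c : good n F P -> k < length P -> node_eq (tk P k) (cnode (length F) i s c) -> c <> CPend ->
  k + 1 < length P /\ exists c', cstep (length F) c c' /\ node_eq (tk P (k+1)) (cnode (length F) i s c').
Proof.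
  intros G Hk0 HA Hc.
  destruct (tr_ex _ _ _ k G Hk0) as (p0&q0&o0&T0).
  assert (Hk : k + 1 < length P).
  { eapply tr_notlast; eauto. intro HC. eapply hasC_ne in HC;
    [| apply ne_sym; eapply ne_trans; [apply ne_sym; exact HA| apply tr_tail in T0; exact T0]].
    destruct s, c; hck HC. }
  split; auto.
  setup G Hk k; assert (HA' := ne_trans _ _ _ (ne_sym _ _ Ht) HA); try clash HA' H1.
  - destruct (cnode_inj _ _ _ _ _ _ _ (ne_trans _ _ _ (ne_sym _ _ HA') H1)) as (<-&<-&<-).
    exists c1; split; auto. eapply ne_trans; eauto.
  - destruct (cnode_inj _ _ _ _ _ _ _ (ne_trans _ _ _ (ne_sym _ _ HA') H1)) as (_&_&E). congruence.
Qed.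

Lemma first_step n F P k i s : good n F P -> k < length P ->
  arc_eq (ak P k) (arc_of (LB i) (LB' i) (X s i 1)) ->
  k + 1 < length P /\ node_eq (tk P (k+1)) (cnode (length F) i s CP0).
Proof.
  intros G Hk0 HA.
  destruct (tr_ex _ _ _ k G Hk0) as (p0&q0&o0&T0).
  pose proof (ae_trans _ _ _ (ae_sym _ _ (proj2 T0)) HA) as E.
  destruct (R_distinct _ _ _ _ _ (proj1 T0)) as (d1&d2&d3).
  apply arc_of_inj in E; auto; try (destruct s; discriminate).
  destruct E as [Eo Epq]. subst o0.
  assert (Hk : k + 1 < length P).
  { eapply tr_notlast; eauto. intro HC. eapply hasC_ne in HC; [|exact Epq]. hck HC. }
  split; auto.
  destruct (tr_ex _ _ _ (k+1) G Hk) as (p'&q'&o'&T1).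
  pose proof (tr_link _ _ _ _ _ _ _ _ _ _ G Hk T0 T1) as Hl.
  pose proof (step _ _ _ _ _ _ _ _ (proj1 G) (proj1 T0) (proj1 T1) Hl) as HS.
  pose proof (tr_tail _ _ _ _ _ _ _ T1) as Ht1.
  destruct HS as [(H1&H2)|[(H1&H2)|[(i0&s0&Hi0&H1&Ho&H2)|[(H1&Ho&H2)|[(i0&s0&c0&c1&Hi0&Hcs&H1&H2)|[(i0&s0&Hi0&H1&H2)|[(H1&H2)|(H1&i0&s0&j0&Hi0&H2)]]]]]]];
  try clash Epq H1.
  - assert (Hc := ne_trans _ _ _ (ne_sym _ _ Epq) H1). nek Hc.
    destruct s, s0; simpl in Ho; try discriminate; eapply ne_trans; eauto.
  - destruct s; discriminate.
Qed.

Lemma chain_forward n F P k1 i s : good n F P -> k1 < length P ->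
  arc_eq (ak P k1) (arc_of (LB i) (LB' i) (X s i 1)) ->
  forall j, 1 <= j <= length F -> exists k3, k1 < k3 < length P /\ node_eq (tk P k3) (cnode (length F) i s (CPxy j)).
Proof.
  intros G Hk1 HA j. induction j as [|j IH]; intros Hj; [lia|].
  destruct (Nat.eq_dec j 0) as [->|Hj0].
  - destruct (first_step _ _ _ _ _ _ G Hk1 HA) as [Hk2 H2].
    destruct (walk _ _ _ _ _ _ _ G Hk2 H2 ltac:(discriminate)) as [Hk3 (c'&Hc&H3)].
    inversion Hc; subst. exists (k1+1+1); split; [lia|exact H3].
  - destruct (IH ltac:(lia)) as (k3&Hk3&H3).
    destruct (walk _ _ _ _ _ _ _ G (proj2 Hk3) H3 ltac:(discriminate)) as [Hk4 (c'&Hc&H4)].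
    inversion Hc; subst; [|lia].
    destruct (walk _ _ _ _ _ _ _ G Hk4 H4 ltac:(discriminate)) as [Hk5 (c''&Hc'&H5)].
    inversion Hc'; subst. exists (k3+1+1). split; [lia|]. replace (S j) with (j+1) by lia. exact H5.
Qed.

Lemma chain_VX n F P k p q o i s c : good n F P -> k < length P -> Tr n F P k p q o ->
  node_eq (p,q) (cnode (length F) i s c) -> VX P i s.
Proof.
  intros G Hk T HA. pose proof (tr_tail _ _ _ _ _ _ _ T) as Ht.
  assert (HA' := ne_trans _ _ _ Ht HA).
  destruct (Inv2 _ _ _ _ G Hk) as [[_ HV]|[HC _]].
  - destruct HV as [H1|[H1|[(i0&_&H1&_)|(i0&s0&c0&_&H1&_&Hv)]]];
      try (exfalso; assert (Hc := ne_trans _ _ _ (ne_sym _ _ HA') H1); nek Hc; fail).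
    destruct (cnode_inj _ _ _ _ _ _ _ (ne_trans _ _ _ (ne_sym _ _ HA') H1)) as (<-&<-&_).
    destruct Hv as (k'&Hk'&Hv). exists k'; split; [lia|auto].
  - exfalso. eapply hasC_ne in HC; [|exact HA']. destruct s, c; hck HC.
Qed.

Lemma no_riii2 n F P k2 j i s : good n F P -> k2 < length P ->
  Tr n F P k2 (LC j) (X s i j) (Y s i j) -> VX P i s -> 1 <= j <= length F -> False.
Proof.
  intros G Hk2 T (k1&Hk1&HA) Hj.
  destruct (chain_forward _ _ _ _ _ _ G Hk1 HA j Hj) as (k3&Hk3&H3).
  pose proof (tr_tail _ _ _ _ _ _ _ T) as Ht.
  destruct (lt_eq_lt_dec k3 k2) as [[Hlt|Heq]|Hgt].
  - destruct (tr_acyc _ _ _ k2 k3 _ _ _ G ltac:(lia) T) as [_ N2].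
    apply N2. apply ne_sym. exact H3.
  - subst. assert (Hc := ne_trans _ _ _ (ne_sym _ _ Ht) H3). destruct s; nek Hc.
  - destruct (Inv2 _ _ _ _ G (proj2 Hk3)) as [[HV0 _]|[HC _]].
    + apply (HV0 k2 ltac:(lia)). eapply hasC_ne; [|apply ne_sym; exact Ht]. exists j; left; reflexivity.
    + eapply hasC_ne in HC; [|exact H3]. destruct s; hck HC.
Qed.

Lemma no_riii1 n F P k j i s : good n F P -> k < length P ->
  Tr n F P k (LC j) (LD j) (X s i j) -> VX P i s -> 1 <= j <= length F -> False.
Proof.
  intros G Hk T HV Hj.
  assert (Hk1 : k + 1 < length P).
  { destruct (Nat.eq_dec (k+1) (length P)); [|lia]. exfalso.
    destruct (tr_last _ _ _ _ _ _ _ G e T) as [Hc|Hc]; destruct s; nek Hc. }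
  destruct (tr_ex _ _ _ (k+1) G Hk1) as (p'&q'&o'&T1).
  pose proof (tr_link _ _ _ _ _ _ _ _ _ _ G Hk1 T T1) as Hl.
  destruct (succ_riii1 _ _ _ _ _ j s i (proj1 T1) Hl) as (->&->&->).
  eapply no_riii2; eauto.
Qed.

Lemma no_riii3 n F P k j i s : good n F P -> k < length P ->
  Tr n F P k (LC j) (Y s i j) (LC (j+1)) -> VX P i s -> 1 <= j <= length F -> False.
Proof.
  intros G Hk T HV Hj.
  pose proof (tr_tail _ _ _ _ _ _ _ T) as Ht.
  destruct k as [|k].
  - destruct G as (_&_&_&(_&_&H0&_)&_). assert (Hc := ne_trans _ _ _ (ne_sym _ _ H0) Ht).
    destruct s; nek Hc.
  - destruct (tr_ex _ _ _ k G ltac:(lia)) as (p0&q0&o0&T0).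
    replace (S k) with (k+1) in * by lia.
    pose proof (tr_link _ _ _ _ _ _ _ _ _ _ G Hk T0 T) as Hl.
    destruct (pred_riii3 _ _ _ _ _ j s i (proj1 T0) Hl) as (->&->&->).
    eapply no_riii2 with (k2 := k); eauto. lia.
Qed.

Definition vx P i s : bool := if excluded_middle_informative (VX P i s) then true else false.
Lemma vx_t P i s : VX P i s -> vx P i s = true.
Proof. unfold vx; destruct excluded_middle_informative; tauto. Qed.
Lemma vx_f P i s : ~ VX P i s -> vx P i s = false.
Proof. unfold vx; destruct excluded_middle_informative; tauto. Qed.

Definition rank n (F : cnf) P (l : leaf) : nat :=
  match l with
  | LAlpha => 0 | LBeta => 1
  | LB i => (2*length F+4)*i | LB' i => (2*length F+4)*i+1
  | LX i j => if vx P i true then (2*length F+4)*i+2*j else (2*length F+4)*(n+2)+4*j+2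
  | LY i j => if vx P i true then (2*length F+4)*i+2*j+1 else (2*length F+4)*(n+2)+4*j+3
  | LXb i j => if vx P i false then (2*length F+4)*i+2*j else (2*length F+4)*(n+2)+4*j+2
  | LYb i j => if vx P i false then (2*length F+4)*i+2*j+1 else (2*length F+4)*(n+2)+4*j+3
  | LC j => (2*length F+4)*(n+2)+4*j
  | LD j => (2*length F+4)*(n+2)+4*j+1
  | LGamma => (2*length F+4)*(n+2)+4*length F+8
  end.

Ltac tryc G Hk T i s := first
  [ eapply (chain_VX _ _ _ _ _ _ _ i s CP0 G Hk T); apply ne_refl
  | eapply (chain_VX _ _ _ _ _ _ _ i s (CPxy _) G Hk T); apply ne_refl
  | eapply (chain_VX _ _ _ _ _ _ _ i s (CPyx _) G Hk T); apply ne_refl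
  | eapply (chain_VX _ _ _ _ _ _ _ i s CPend G Hk T); apply ne_refl ].

Lemma rank_ok n F P k p q o : good n F P -> k < length P -> Tr n F P k p q o ->
  rank n F P p < rank n F P o /\ rank n F P q < rank n F P o.
Proof.
  intros G Hk T. pose proof T as [HR HA]. pose proof (proj1 (proj2 G)) as Hm.
  inversion HR; subst.
  all: try (assert (V : VX P i true) by (first [exists k; split; [lia|exact HA] | tryc G Hk T i true]);
            rewrite ?(vx_t _ _ _ V)).
  all: try (assert (V : VX P i false) by (first [exists k; split; [lia|exact HA] | tryc G Hk T i false]);
            rewrite ?(vx_t _ _ _ V)).
  all: try (assert (V : ~ VX P i true) by (intro V; first
              [ exact (no_riii1 _ _ _ _ _ _ true G Hk T V ltac:(lia))
              | exact (no_riii2 _ _ _ _ _ _ true G Hk T V ltac:(lia))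
              | exact (no_riii3 _ _ _ _ _ _ true G Hk T V ltac:(lia)) ]); rewrite ?(vx_f _ _ _ V)).
  all: try (assert (V : ~ VX P i false) by (intro V; first
              [ exact (no_riii1 _ _ _ _ _ _ false G Hk T V ltac:(lia))
              | exact (no_riii2 _ _ _ _ _ _ false G Hk T V ltac:(lia))
              | exact (no_riii3 _ _ _ _ _ _ false G Hk T V ltac:(lia)) ]); rewrite ?(vx_f _ _ _ V)).
  all: simpl; rewrite ?(vx_t _ _ _ V), ?(vx_f _ _ _ V); try (split; nia).

Qed.

Fixpoint cat (s : list leaf) : tree :=
  match s with
  | [] => TLeaf LAlpha
  | x :: s' => match s' with [] => TLeaf x | _ => TNode (cat s') (TLeaf x) end
  end.

Lemma cat_cons x s : s <> [] -> cat (x :: s) = TNode (cat s) (TLeaf x).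
Proof. destruct s; [congruence|reflexivity]. Qed.

Lemma leaves_cat s : s <> [] -> leaves (cat s) = rev s.
Proof.
  induction s as [|x s IH]; intros H; [congruence|].
  destruct s as [|y s]; [reflexivity|].
  rewrite cat_cons by congruence. cbn [leaves]. rewrite IH by congruence. reflexivity.
Qed.

Lemma addr_in T x : In x (leaves T) -> exists a, addr T x = Some a.
Proof.
  induction T as [y|l IHl r IHr]; simpl; intros H.
  - destruct H as [->|[]]. destruct (leaf_eq_dec x x); [eauto|congruence].
  - destruct (addr l x) eqn:E; [eauto|].
    apply in_app_or in H. destruct H as [H|H].
    + destruct (IHl H) as [a Ha]; congruence.
    + destruct (IHr H) as [a Ha]; rewrite Ha; simpl; eauto.
Qed.

Lemma addr_notin T x : ~ In x (leaves T) -> addr T x = None.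
Proof.
  induction T as [y|l IHl r IHr]; simpl; intros H.
  - destruct (leaf_eq_dec x y); [subst; tauto|auto].
  - rewrite IHl, IHr; auto; intro; apply H; apply in_or_app; auto.
Qed.

Lemma is_prefix_cons b u w : is_prefix (b :: u) (b :: w) -> is_prefix u w.
Proof. intros [s Hs]; exists s; simpl in Hs; congruence. Qed.
Lemma is_prefix_cons2 b u w : is_prefix u w -> is_prefix (b :: u) (b :: w).
Proof. intros [s Hs]; exists s; simpl; congruence. Qed.
Lemma is_prefix_head b u v : is_prefix (b :: u) v -> exists v', v = b :: v' /\ is_prefix u v'.
Proof. intros [s Hs]; simpl in Hs; subst; eexists; split; [reflexivity|exists s; reflexivity]. Qed.

Lemma lcp_ff a b : lcp (false :: a) (false :: b) = false :: lcp a b.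
Proof. reflexivity. Qed.

Lemma cat_disp s1 o s2 p q : NoDup (s1 ++ o :: s2) -> In p s2 -> In q s2 ->
  displays (cat (s1 ++ o :: s2)) p q o.
Proof.
  induction s1 as [|x s1 IH]; intros Hnd Hp Hq; cbn [app] in *.
  - assert (Hs2 : s2 <> []) by (destruct s2; simpl in Hp; [tauto|congruence]).
    rewrite cat_cons by auto.
    inversion Hnd as [|? ? Ho Hnd2]; subst.
    assert (Hp' : In p (leaves (cat s2))) by (rewrite leaves_cat, <- in_rev; auto).
    assert (Hq' : In q (leaves (cat s2))) by (rewrite leaves_cat, <- in_rev; auto).
    assert (Ho' : ~ In o (leaves (cat s2))) by (rewrite leaves_cat, <- in_rev; auto).
    destruct (addr_in _ _ Hp') as [ap Hap]. destruct (addr_in _ _ Hq') as [aq Haq].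
    exists (false :: ap), (false :: aq), [true].
    simpl. rewrite Hap, Haq, (addr_notin _ _ Ho'). destruct (leaf_eq_dec o o); [|congruence].
    repeat split; auto.
    intros v [[_ Hl] Hr]. rewrite lcp_ff in Hl.
    destruct (is_prefix_head _ _ _ Hl) as (v'&->&_).
    destruct Hr as [s Hs]. simpl in Hs. discriminate.
  - assert (Hs : s1 ++ o :: s2 <> []) by (destruct s1; simpl; congruence).
    rewrite cat_cons by auto.
    inversion Hnd as [|? ? Hx Hnd2]; subst.
    destruct (IH Hnd2 Hp Hq) as (ap&aq&ao&Hap&Haq&Hao&Hd).
    exists (false :: ap), (false :: aq), (false :: ao).
    simpl. rewrite Hap, Haq, Hao. repeat split; auto.
    intros v [[Hpq Hl] Hr]. rewrite lcp_ff in Hl.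
    destruct (is_prefix_head _ _ _ Hl) as (v'&->&Hl').
    apply (Hd v'). split; [split; [|exact Hl']|].
    + destruct Hpq as [H|H]; [left|right]; eapply is_prefix_cons; eauto.
    + eapply is_prefix_cons; eauto.
Qed.


Fixpoint ins (r : leaf -> nat) x l := match l with
  | [] => [x]
  | y :: l' => if r x <=? r y then y :: ins r x l' else x :: l end.
Fixpoint isort r l := match l with [] => [] | x :: l' => ins r x (isort r l') end.

Lemma ins_perm r x l : Permutation (ins r x l) (x :: l).
Proof.
  induction l as [|y l IH]; simpl; auto.
  destruct (r x <=? r y); auto.
  eapply perm_trans; [apply perm_skip, IH|]. apply perm_swap.
Qed.
Lemma isort_perm r l : Permutation (isort r l) l.
Proof.
  induction l as [|x l IH]; simpl; auto.
  eapply perm_trans; [apply ins_perm|]. apply perm_skip, IH.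
Qed.

Lemma ins_sorted r x l : StronglySorted (fun a b => r b <= r a) l ->
  StronglySorted (fun a b => r b <= r a) (ins r x l).
Proof.
  induction l as [|y l IH]; simpl; intros H.
  - constructor; auto.
  - inversion H as [|? ? H1 H2]; subst.
    destruct (r x <=? r y) eqn:E.
    + apply Nat.leb_le in E. constructor; auto.
      apply Forall_forall. intros z Hz.
      apply (Permutation_in _ (ins_perm r x l)) in Hz. destruct Hz as [->|Hz]; auto.
      rewrite Forall_forall in H2; auto.
    + apply Nat.leb_gt in E. constructor; auto. constructor; [lia|].
      rewrite Forall_forall in *. intros z Hz. specialize (H2 z Hz). lia.
Qed.
Lemma isort_sorted r l : StronglySorted (fun a b => r b <= r a) (isort r l).
Proof. induction l; simpl; [constructor|apply ins_sorted; auto]. Qed.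

Lemma sorted_split (r : leaf -> nat) s1 o s2 x : StronglySorted (fun a b => r b <= r a) (s1 ++ o :: s2) ->
  In x s1 -> r o <= r x.
Proof.
  induction s1 as [|y s1 IH]; simpl; intros H Hx; [tauto|].
  inversion H as [|? ? H1 H2]; subst. destruct Hx as [->|Hx]; auto.
  rewrite Forall_forall in H2. apply H2. apply in_or_app; simpl; auto.
Qed.

Definition arc_leaves (a : arc) : list leaf :=
  [fst (tl a); snd (tl a); fst (hd1 a); snd (hd1 a); fst (hd2 a); snd (hd2 a)].

Lemma leaf_in_arc a p q o : arc_eq a (arc_of p q o) ->
  In p (arc_leaves a) /\ In q (arc_leaves a) /\ In o (arc_leaves a).
Proof.
  unfold arc_eq, arc_leaves, node_eq; simpl.
  intros [T H].
  repeat match goal with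
  | H : _ /\ _ |- _ => destruct H
  | H : _ \/ _ |- _ => destruct H
  end; rewrite ?H0, ?H1, ?H2, ?H3, ?H4, ?H5 ; simpl; intuition congruence.
Qed.

Theorem lemma2 (n : nat) (F : cnf) (P : list arc) :
  wf_cnf n F ->
  1 <= length F ->
  (forall a, In a P -> in_A n F a) ->
  is_path P (LAlpha, LBeta) (LC (length F + 1), LGamma) ->
  acyclic P ->
  consistent (triples_of P).
Proof.
  intros Hwf Hm HA Hp Hac.
  assert (G : good n F P) by (unfold good; tauto).
  set (rk := rank n F P).
  set (Ls := nodup leaf_eq_dec (flat_map arc_leaves P)).
  set (S := isort rk Ls).
  assert (HS : forall x, In x S <-> In x (flat_map arc_leaves P)).
  { intro x. unfold S. split; intro H.
    - apply (Permutation_in _ (isort_perm rk Ls)) in H. apply nodup_In in H; auto.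
    - apply (Permutation_in _ (Permutation_sym (isort_perm rk Ls))). apply nodup_In; auto. }
  assert (HnS : NoDup S).
  { apply (Permutation_NoDup (Permutation_sym (isort_perm rk Ls))). apply NoDup_nodup. }
  assert (Hne : S <> []).
  { destruct P as [|a P']; [destruct Hp as [Hp _]; congruence|].
    intro E. assert (In (fst (tl a)) S) by (apply HS; simpl; auto). rewrite E in H; inversion H. }
  exists (cat S). split.
  - unfold phylo_tree. rewrite leaves_cat by auto.
    apply (Permutation_NoDup (Permutation_rev S)); auto.
  - intros p q o (d1&d2&d3&a&Ha&Hae).
    destruct (In_nth P a dummy_arc Ha) as (k&Hk&Hka).
    destruct (HA a Ha) as (p'&q'&o'&HR&Hae').
    destruct (R_distinct _ _ _ _ _ HR) as (e1&e2&e3).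
    destruct (arc_of_inj p q o p' q' o' d1 d2 d3 e1 e2 e3 (ae_trans _ _ _ (ae_sym _ _ Hae) Hae')) as [<- Hpq].
    assert (T : Tr n F P k p' q' o) by (split; auto; unfold ak; rewrite Hka; auto).
    destruct (rank_ok _ _ _ _ _ _ _ G Hk T) as [r1 r2].
    assert (Hr : rk p < rk o /\ rk q < rk o).
    { unfold rk; destruct Hpq as [[E1 E2]|[E1 E2]]; simpl in E1, E2; subst; auto. }
    destruct (leaf_in_arc _ _ _ _ Hae) as (ip&iq&io).
    assert (Ho : In o S) by (apply HS; apply in_flat_map; eauto).
    assert (Hp' : In p S) by (apply HS; apply in_flat_map; eauto).
    assert (Hq' : In q S) by (apply HS; apply in_flat_map; eauto).
    destruct (in_split _ _ Ho) as (s1&s2&Es).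
    assert (Hsort := isort_sorted rk Ls). fold S in Hsort. rewrite Es in Hsort.
    assert (Hin : forall x, In x S -> x <> o -> rk x < rk o -> In x s2).
    { intros x Hx Hxo Hxr. rewrite Es in Hx. apply in_app_or in Hx. destruct Hx as [Hx|[Hx|Hx]]; auto.
      - pose proof (sorted_split rk _ _ _ _ Hsort Hx). lia.
      - congruence. }
    rewrite Es. apply cat_disp.
    + rewrite <- Es; auto.
    + apply Hin; tauto.
    + apply Hin; tauto.
Qed.
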